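(* Let $P$ be a pseudotree and let $Z$ be a set of vertices such that $\alpha(P) > \alpha(P-Z)$. Then there exist three (possibly non-distinct) vertices $u,v,w \in Z \cap V(P)$ such that $\alpha(P) > \alpha(P-\{u,v,w\})$.
   Context: A pseudotree is a connected finite simple graph containing at most one cycle. $\alpha(H)$ denotes the maximum size of an independent set of a graph $H$. For a vertex set $S$, $P - S$ denotes the graph obtained from $P$ by deleting the vertices of $S\cap V(P)$ and their incident edges. *)

(* Defs.v *)
From mathcomp Require Import all_boot.
Set Implicit Arguments. Unset Strict Implicit. Unset Printing Implicit Defensive.

Section Graph.
Variables (T : finType) (e : rel T).

Definition simple_graph := symmetric e /\ irreflexive e.

Definition connected_graph := forall x y : T, connect e x y.

Definition is_cycle (c : seq T) := [/\ uniq c, 3 <= size c & cycle e c].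

(* Edge set of a cyclic sequence, as a symmetric set of ordered pairs. *)
Definition cycle_edges (c : seq T) : {set T * T} :=
  [set p : T * T | ((p.1 \in c) && (next c p.1 == p.2))
                || ((p.2 \in c) && (next c p.2 == p.1))].

Definition at_most_one_cycle :=
  forall c1 c2 : seq T, is_cycle c1 -> is_cycle c2 -> cycle_edges c1 = cycle_edges c2.

Definition pseudotree := [/\ simple_graph, connected_graph & at_most_one_cycle].

Definition independent (A : {set T}) := [forall x in A, forall y in A, ~~ e x y].

(* alpha (P - S): maximum size of an independent set of P avoiding S. *)
Definition alpha_minus (S : {set T}) : nat :=
  \max_(A : {set T} | independent A && [disjoint A & S]) #|A|.

Definition alpha : nat := alpha_minus set0.
End Graph.

(* Main.v *)
Require Import Defs.
From mathcomp Require Import all_boot zify.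
Set Implicit Arguments. Unset Strict Implicit. Unset Printing Implicit Defensive.
Lemma ar1 p q r s t u n : p + q = n -> r + s = n -> q + t <= n -> s + u <= n ->
  u = p -> t = r -> q + t = n.
Proof. lia. Qed.
Lemma ar3 n a b c d : 2 * n <= a + b + c + d -> 2 * a < n -> 2 * b < n ->
  2 * c < n -> 2 * d < n -> False.
Proof. lia. Qed.
Lemma ar4 m n : m <= n -> m != n -> m < n.
Proof. lia. Qed.

Lemma dup_split (T : eqType) (s : seq T) : ~~ uniq s ->
  exists x s1 s2 s3, s = s1 ++ x :: s2 ++ x :: s3.
Proof.
elim: s => [|y t IH] //= /nandP [/negbNE yt | /IH [x [s1 [s2 [s3 ->]]]]].
  case/splitPr: yt => s2 s3; by exists y, [::], s2, s3.
by exists x, (y :: s1), s2, s3.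
Qed.

Lemma odd_cycle_extract (T : eqType) (e : rel T) : irreflexive e ->
  forall s, cycle e s -> odd (size s) ->
  exists c, [/\ uniq c, 3 <= size c, cycle e c, odd (size c) & {subset c <= s}].
Proof.
move=> irr s; have [n] := ubnP (size s); elim: n s => // n IH s Hn cs os.
case Us: (uniq s).
  exists s; split => //.
  case: s Hn cs os Us => [|x [|y t]] //= _; first by rewrite irr.
  by case: t => //.
have [x [s1 [s2 [s3 Es]]]] := dup_split (negbT Us).
have Hr : rot (size s1) s = x :: s2 ++ x :: (s3 ++ s1).
  by rewrite Es rot_size_cat /= -catA.
have cr : cycle e (x :: s2 ++ x :: (s3 ++ s1)) by rewrite -Hr rot_cycle.
move: cr; rewrite /= rcons_cat /= cat_path /= => /and3P [p1 ex p2].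
have c1 : cycle e (x :: s2) by rewrite /= rcons_path p1.
have c2 : cycle e (x :: (s3 ++ s1)) by rewrite /= p2.
have sz : size s = (size (x :: s2)) + size (x :: (s3 ++ s1)).
  by rewrite Es !size_cat /= !size_cat /=; lia.
have sub1 : {subset (x :: s2) <= s}.
  by move=> z; rewrite Es !mem_cat !inE !mem_cat !inE => /orP[->|->]; rewrite ?orbT.
have sub2 : {subset (x :: (s3 ++ s1)) <= s}.
  by move=> z; rewrite Es !mem_cat !inE !mem_cat !inE => /orP[->|]; rewrite ?orbT //
     => /orP[->|->]; rewrite ?orbT.
have [o1|o1] := boolP (odd (size (x :: s2))).
  have [c [? ? ? ? sc]] := IH (x :: s2) ltac:(move: Hn; rewrite sz /=; lia) c1 o1.
  exists c; split => // z /sc; exact: sub1.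
have o2 : odd (size (x :: (s3 ++ s1))).
  by move: os; rewrite sz oddD (negbTE o1).
have [c [? ? ? ? sc]] := IH (x :: (s3 ++ s1)) ltac:(move: Hn; rewrite sz /=; lia) c2 o2.
exists c; split => // z /sc; exact: sub2.
Qed.
Section G.
Variables (T : finType) (e : rel T).
Hypothesis sym : symmetric e.

Lemma indepP (I : {set T}) : independent e I -> forall x y, x \in I -> y \in I -> ~~ e x y.
Proof. by move=> /forall_inP H x y xI yI; move/forall_inP: (H x xI) => /(_ y yI). Qed.

Definition Wd (I K : {set T}) := (I :\: K) :|: (K :\: I).
Definition er (I K : {set T}) := [rel u v | e u v && (u \in Wd I K) && (v \in Wd I K)].

Lemma swap_indep (I K X : {set T}) : independent e I -> independent e K ->
  (forall v u, v \in X -> u \in Wd I K -> e v u -> u \in X) ->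
  independent e ((I :\: X) :|: (X :&: K)).
Proof.
move=> HI HK cl.
have key : forall x y, x \in I -> x \notin X -> y \in X -> y \in K -> ~~ e x y.
  move=> x y xI xX yX yK; apply/negP => exy.
  case xK: (x \in K); first by have := indepP HK xK yK; rewrite exy.
  have xW : x \in Wd I K by rewrite !inE xI xK.
  by move: (cl y x yX xW); rewrite sym exy (negbTE xX) => /(_ isT).
apply/forall_inP => x; rewrite !inE => Hx; apply/forall_inP => y; rewrite !inE => Hy.
case/orP: Hx => [/andP[xX xI]|/andP[xX xK]]; case/orP: Hy => [/andP[yX yI]|/andP[yX yK]].
- exact: indepP HI x y xI yI.
- exact: key.
- rewrite sym; exact: key.
- exact: indepP HK x y xK yK.
Qed.

Lemma path_parity (I K : {set T}) : independent e I -> independent e K ->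
  forall p x, path (er I K) x p -> (last x p \in I) = (x \in I) (+) odd (size p).
Proof.
move=> HI HK; elim=> [|y q IH] x /=; first by rewrite addbF.
case/andP=> /andP[/andP[exy xW] yW] pq; rewrite IH //.
have -> : (y \in I) = ~~ (x \in I).
  move: xW yW; rewrite !inE.
  case xI: (x \in I); case yI: (y \in I) => //=.
  - by have := indepP HI xI yI; rewrite exy.
  - rewrite ?andbF /= => xK yK.
    by have := indepP HK xK yK; rewrite exy.
by case: (x \in I); case: (odd (size q)).
Qed.

Lemma path_W (I K : {set T}) p x : path (er I K) x p -> {subset p <= Wd I K}.
Proof.
elim: p x => [|y q IH] x //= /andP[/andP[/andP[_ _] yW] pq] z.
by rewrite inE => /orP[/eqP->//|]; apply: IH pq z.
Qed.

Definition conn x y (I K : {set T}) :=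
  exists p, [/\ path e x p, last x p = y, odd (size p) & {subset p <= I :|: K}].

Lemma pair_path (n : nat) (S I K : {set T}) x y :
  (forall J, independent e J -> #|J| <= n) ->
  (forall J, independent e J -> #|J| = n -> exists2 z, z \in J & z \in S) ->
  independent e I -> #|I| = n -> x \in I -> (forall z, z \in S -> z \in I -> z = x) ->
  independent e K -> #|K| = n -> y \in K -> (forall z, z \in S -> z \in K -> z = y) ->
  x \in S -> y \in S -> x != y -> conn x y I K.
Proof.
move=> len hit HI cI xI uI HK cK yK uK xS yS xy.
have xK : x \notin K by apply/negP => /(uK x xS) /eqP; rewrite (negbTE xy).
have yI : y \notin I by apply/negP => /(uI y yS) /eqP; rewrite eq_sym (negbTE xy).
have xW : x \in Wd I K by rewrite !inE xI xK.
case cxy: (connect (er I K) x y).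
  case/connectP: cxy => p pp yl; exists p; split.
  - by apply: sub_path pp => u v /andP[/andP[]].
  - by rewrite yl.
  - by move: (path_parity HI HK pp); rewrite -yl (negbTE yI) xI /= => /esym/negbFE.
  - move=> z /(path_W pp); rewrite !inE => /orP[/andP[_ ->]|/andP[_ ->]]; by rewrite ?orbT.
exfalso.
pose X := [set z | connect (er I K) x z].
have XW : forall z, z \in X -> z \in Wd I K.
  move=> z; rewrite inE => /connectP[p pp ->].
  case: (lastP p) pp => [//|q w] pp.
  by rewrite last_rcons; apply: (path_W pp); rewrite mem_rcons mem_head.
have cl : forall v u, v \in X -> u \in Wd I K -> e v u -> u \in X.
  move=> v u vX uW evu; have vW := XW v vX.
  move: vX; rewrite !inE => cxv; apply: (connect_trans cxv); apply: connect1.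
  by rewrite /= evu vW uW.
have WKI : Wd K I = Wd I K by rewrite /Wd setUC.
have cl' : forall v u, v \in X -> u \in Wd K I -> e v u -> u \in X.
  by rewrite WKI.
have HJ := swap_indep HI HK cl.
have HJ' := swap_indep HK HI cl'.
have cardJ : forall A B : {set T}, #|(A :\: X) :|: (X :&: B)| = #|A :\: X| + #|X :&: B|.
  move=> A B; rewrite cardsU.
  suff -> : (A :\: X) :&: (X :&: B) = set0 by rewrite cards0 subn0.
  apply/setP => z; rewrite !(in_setI, in_setD, in_set0); by case: (z \in X); rewrite /= ?andbF.
have e1 := cardsID X I; have e2 := cardsID X K.
have l1 := len _ HJ; have l2 := len _ HJ'.
rewrite cardJ in l1; rewrite cardJ in l2.
have sI : #|X :&: I| = #|I :&: X| by rewrite setIC.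
have sK : #|X :&: K| = #|K :&: X| by rewrite setIC.
have cJ : #|(I :\: X) :|: (X :&: K)| = n.
  rewrite cardJ; rewrite cI in e1; rewrite cK in e2.
  by apply: (ar1 e1 e2 l1 l2); rewrite setIC.
have [z zJ zS] := hit _ HJ cJ.
move: zJ; rewrite !inE => /orP[/andP[zX zI']|/andP[zX zK']].
  by move: zX; rewrite (uI z zS zI') connect0.
by move: zX cxy; rewrite (uK z zS zK') => ->.
Qed.

Lemma cycle_count (c : seq T) (I : {set T}) :
  is_cycle e c -> odd (size c) -> independent e I ->
  2 * #|[set v | (v \in c) && (v \in I)]| < size c.
Proof.
case=> Uc _ cc oc HI.
set A := [set v | (v \in c) && (v \in I)].
set B := [set next c v | v in A].
have cB : #|B| = #|A|.
  apply: card_in_imset => x y _ _; exact: (can_inj (prev_next Uc)).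
have dAB : A :&: B = set0.
  apply/setP => z; rewrite !inE; apply/negbTE/negP => /andP[/andP[zc zI] /imsetP[v]].
  rewrite inE => /andP[vc vI] Ez.
  have := indepP HI vI zI; by rewrite Ez (next_cycle cc vc).
have sAB : A :|: B \subset [set v | v \in c].
  apply/subsetP => z; rewrite !inE => /orP[/andP[->]//|/imsetP[v]]; rewrite inE => /andP[vc _] ->.
  by rewrite mem_next.
have := subset_leq_card sAB.
rewrite cardsU dAB cards0 subn0 cB.
have -> : #|[set v | v \in c]| = size c.
  rewrite -(card_uniqP Uc); apply: eq_card => z; by rewrite inE.
have := odd_double_half (size c); rewrite oc => Hs.
lia.
Qed.

Lemma cycle_edges_mem (c1 c2 : seq T) : cycle_edges c1 = cycle_edges c2 ->
  {subset c1 <= c2}.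
Proof.
move=> E x xc1.
have : (x, next c1 x) \in cycle_edges c1 by rewrite inE /= xc1 eqxx.
rewrite E inE /= => /orP[/andP[//]|/andP[yc2 /eqP <-]]; by rewrite mem_next.
Qed.

Lemma tri x y z (Ix Iy Iz : {set T}) : irreflexive e -> x \in Ix ->
  conn x y Ix Iy -> conn y z Iy Iz -> conn z x Iz Ix ->
  exists c, [/\ is_cycle e c, odd (size c) & {subset c <= Ix :|: Iy :|: Iz}].
Proof.
move=> irr xI [p1 [pa1 l1 o1 s1]] [p2 [pa2 l2 o2 s2]] [p3 [pa3 l3 o3 s3]].
set q := p1 ++ p2 ++ p3.
have pq : path e x q by rewrite /q !cat_path pa1 l1 pa2 l2 pa3.
have lq : last x q = x by rewrite /q !last_cat l1 l2 l3.
have oq : odd (size q) by rewrite /q !size_cat !oddD o1 o2 o3.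
have sq : {subset x :: q <= Ix :|: Iy :|: Iz}.
  move=> w; rewrite inE !mem_cat => /orP[/eqP->|/orP[/s1|/orP[/s2|/s3]]];
    rewrite !inE ?xI //; by case/orP=> ->; rewrite ?orbT.
move: pq lq oq sq; case/lastP: q => [//|r w]; rewrite last_rcons => pq Hw oq sq; subst w.
have cc : cycle e (x :: r) by [].
have [c [Uc c3 ccc oc sc]] := odd_cycle_extract irr cc ltac:(by move: oq; rewrite size_rcons).
exists c; split => //.
move=> v /sc; rewrite inE => /orP[/eqP->|vr]; apply: sq; first by rewrite mem_head.
by rewrite inE mem_rcons inE vr !orbT.
Qed.
End G.

Theorem lemma4 (T : finType) (e : rel T) (Z : {set T}) :
  pseudotree e ->
  alpha_minus e Z < alpha e ->
  exists u v w : T, [/\ u \in Z, v \in Z, w \in Z &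
    alpha_minus e [set u; v; w] < alpha e].
Proof.
case=> [[sym irr] _ uc] HZ.
have disj0 : forall A : {set T}, [disjoint A & set0] by move=> A; rewrite -setI_eq0 setI0.
have le_n : forall A : {set T}, independent e A -> #|A| <= alpha e.
  move=> A HA; rewrite /alpha /alpha_minus.
  by apply: (leq_bigmax_cond (F := fun A : {set T} => #|A|)); rewrite HA disj0.
have [A0 [HA0 cA0]] : exists A, independent e A /\ #|A| = alpha e.
  have : 0 < #|[pred A : {set T} | independent e A && [disjoint A & set0]]|.
    apply/card_gt0P; exists set0; rewrite inE /= disj0 andbT.
    by apply/forall_inP => x; rewrite inE.
  case/(eq_bigmax_cond (fun A : {set T} => #|A|)) => A; rewrite inE => /andP[HA _] E.
  by exists A; split => //; rewrite /alpha /alpha_minus -E.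
pose hitb (S : {set T}) :=
  [forall A : {set T}, (independent e A && (#|A| == alpha e)) ==> ~~ [disjoint A & S]].
have hitP : forall S, hitb S -> forall J, independent e J -> #|J| = alpha e ->
    exists2 z, z \in J & z \in S.
  move=> S /forallP /(_ _) hS J HJ cJ; move: (hS J); rewrite HJ cJ eqxx /= -setI_eq0.
  by case/set0Pn => z; rewrite inE => /andP[]; exists z.
have hitZ : hitb Z.
  apply/forallP => A; apply/implyP => /andP[HA /eqP cA]; apply/negP => dAZ.
  have H : #|A| <= alpha_minus e Z.
    by apply: (leq_bigmax_cond (F := fun A : {set T} => #|A|)); rewrite HA dAZ.
  by move: HZ; rewrite ltnNge -cA H.
have goalS : forall S, hitb S -> alpha_minus e S < alpha e.
  move=> S hS.
  have n0 : 0 < alpha e by apply: leq_ltn_trans HZ.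
  suff : alpha_minus e S <= (alpha e).-1 by rewrite -ltnS prednK.
  apply/bigmax_leqP => A /andP[HA dA].
  have : #|A| != alpha e.
    apply/eqP => cA; have [z zA zS] := hitP S hS A HA cA.
    by move: dA; rewrite -setI_eq0 => /eqP/setP/(_ z); rewrite !inE zA zS.
  move=> H; rewrite -ltnS prednK //; exact: ar4 (le_n A HA) H.
have hit_mono : forall S S' : {set T}, S \subset S' -> hitb S -> hitb S'.
  move=> S S' sub /forallP hS; apply/forallP => A; apply/implyP => HA.
  move/implyP: (hS A) => /(_ HA); apply: contra => d; exact: disjointWr sub d.
pose P := fun S : {set T} => (S \subset Z) && hitb S.
have PZ : P Z by rewrite /P subxx hitZ.
case: (arg_minnP (fun S : {set T} => #|S|) PZ) => S /andP[SZ hS] Smin.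
have done3 : forall u v w, u \in S -> v \in S -> w \in S -> S \subset [set u; v; w] ->
   exists u v w : T, [/\ u \in Z, v \in Z, w \in Z & alpha_minus e [set u; v; w] < alpha e].
  move=> u v w uS vS wS sub; exists u, v, w; split; try exact: (subsetP SZ).
  by apply: goalS; apply: hit_mono sub hS.
have sub0 : forall B, S :\: B = set0 -> forall z, z \in S -> z \in B.
  move=> B SB z zS; apply/negPn/negP => zB.
  have : z \in S :\: B by rewrite inE zB zS.
  by rewrite SB inE.
have getI : forall x, x \in S -> exists I, [/\ independent e I, #|I| = alpha e, x \in I &
     forall z, z \in S -> z \in I -> z = x].
  move=> x xS.
  have nh : ~~ hitb (S :\ x).
    apply/negP => h; have := Smin (S :\ x).
    rewrite /P h (subset_trans (subD1set S x) SZ) => /(_ isT).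
    by move=> H; move: (cardsD1 x S); rewrite xS add1n => E; move: H; rewrite E ltnn.
  case/forallPn: nh => A; rewrite negb_imply negbK => /andP[/andP[HA /eqP cA] dA].
  have uA : forall z, z \in S -> z \in A -> z = x.
    move=> z zS zA; case: (eqVneq z x) => // zx.
    by move: dA; rewrite -setI_eq0 => /eqP/setP/(_ z); rewrite !inE zA zS zx.
  have [z zA zS] := hitP S hS A HA cA.
  by exists A; split => //; rewrite -(uA z zS zA).
case: (set_0Vmem S) => [S0|[a aS]].
  by have [z _] := hitP S hS A0 HA0 cA0; rewrite S0 inE.
case: (set_0Vmem (S :\ a)) => [Sa|[b bS]].
  apply: (done3 a a a) => //; apply/subsetP => z zS.
  by move: (sub0 _ Sa z zS); rewrite !inE => ->.
case: (set_0Vmem (S :\: [set a; b])) => [Sab|[c cS]].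
  move: (bS); rewrite inE => /andP[_ bS'].
  apply: (done3 a b b) => //; apply/subsetP => z zS.
  by move: (sub0 _ Sab z zS); rewrite !inE => /orP[->|->]; rewrite ?orbT.
case: (set_0Vmem (S :\: [set a; b; c])) => [Sabc|[d dS]].
  move: (bS) (cS); rewrite !inE => /andP[_ bS'] /andP[_ cS'].
  apply: (done3 a b c) => //; apply/subsetP => z zS.
  by move: (sub0 _ Sabc z zS); rewrite !inE => /orP[/orP[->|->]|->]; rewrite ?orbT.
exfalso.
move: bS cS dS; rewrite !inE => /andP[ba bS] /andP[/norP[ca cb] cS]
  /andP[/norP[/norP[da db] dc] dS].
have [Ia [HIa cIa aIa uIa]] := getI a aS.
have [Ib [HIb cIb bIb uIb]] := getI b bS.
have [Ic [HIc cIc cIc' uIc]] := getI c cS.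
have [Id [HId cId dId uId]] := getI d dS.
have hit' := hitP S hS.
have ab : a != b by rewrite eq_sym.
have ac : a != c by rewrite eq_sym.
have ad : a != d by rewrite eq_sym.
have bc : b != c by rewrite eq_sym.
have bd : b != d by rewrite eq_sym.
have cd : c != d by rewrite eq_sym.
have cab := pair_path sym le_n hit' HIa cIa aIa uIa HIb cIb bIb uIb aS bS ab.
have cbc := pair_path sym le_n hit' HIb cIb bIb uIb HIc cIc cIc' uIc bS cS bc.
have cca := pair_path sym le_n hit' HIc cIc cIc' uIc HIa cIa aIa uIa cS aS ca.
have cac := pair_path sym le_n hit' HIa cIa aIa uIa HIc cIc cIc' uIc aS cS ac.
have cbd := pair_path sym le_n hit' HIb cIb bIb uIb HId cId dId uId bS dS bd.
have cda := pair_path sym le_n hit' HId cId dId uId HIa cIa aIa uIa dS aS da.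
have ccd := pair_path sym le_n hit' HIc cIc cIc' uIc HId cId dId uId cS dS cd.
have cdb := pair_path sym le_n hit' HId cId dId uId HIb cIb bIb uIb dS bS db.
have [c1 [cy1 o1 s1]] := tri irr aIa cab cbc cca.
have [c2 [cy2 _ s2]] := tri irr aIa cab cbd cda.
have [c3 [cy3 _ s3]] := tri irr aIa cac ccd cda.
have [c4 [cy4 _ s4]] := tri irr bIb cbc ccd cdb.
have m2 := cycle_edges_mem (uc _ _ cy1 cy2).
have m3 := cycle_edges_mem (uc _ _ cy1 cy3).
have m4 := cycle_edges_mem (uc _ _ cy1 cy4).
pose Cs := [set v | v \in c1].
have key : forall I : {set T}, #|[set v | (v \in c1) && (v \in I)]| = \sum_(v in Cs) (v \in I).
  move=> I; rewrite -sum1_card [LHS]big_mkcond [RHS]big_mkcond; apply: eq_bigr => v _.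
  by rewrite !inE; case: (v \in c1); case: (v \in I).
have lb : 2 * #|Cs| <= \sum_(v in Cs) ((v \in Ia) + (v \in Ib) + (v \in Ic) + (v \in Id)).
  rewrite mulnC -sum_nat_const; apply: leq_sum => v; rewrite inE => vc.
  move: (s1 v vc) (s2 v (m2 v vc)) (s3 v (m3 v vc)) (s4 v (m4 v vc)); rewrite !inE.
  by case: (v \in Ia); case: (v \in Ib); case: (v \in Ic); case: (v \in Id).
rewrite !big_split /= -!key in lb.
have cC : #|Cs| = size c1.
  case: cy1 => Uc _ _; rewrite -(card_uniqP Uc); apply: eq_card => z; by rewrite inE.
rewrite cC in lb.
exact: ar3 lb (cycle_count cy1 o1 HIa) (cycle_count cy1 o1 HIb)
  (cycle_count cy1 o1 HIc) (cycle_count cy1 o1 HId).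
Qed.
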